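(* For every integer $m\ge5$ and every $\alpha\in[0,1]$, selecting an arbitrary candidate from the matching uncovered set yields distortion at least $2.5+\alpha/2$ on $\alpha$-decisive metric spaces; that is, there exist an election with $m$ candidates, an $\alpha$-decisive distance function $d$ consistent with it, and a candidate $a$ in its matching uncovered set such that $\mathrm{SC}(a)\ge(2.5+\alpha/2)\min_{c\in C}\mathrm{SC}(c)$.
   Context: An election: voters $V$, a finite set $C$ of $m$ candidates, a profile of linear orders $\sigma_i$ over $C$; $a\succeq_i c$ means $a=c$ or $i$ ranks $a$ above $c$; $\mathrm{top}(i)$ is $i$'s first choice. A distance function $d$ on $V\cup C$ is nonnegative, symmetric and satisfies the triangle inequality (co-location allowed); it is consistent with $\sigma$ if $d(i,c)\le d(i,c')$ whenever $i$ ranks $c$ above $c'$; it is $\alpha$-decisive if $d(i,\mathrm{top}(i))\le\alpha\,d(i,c)$ for all $i$ and $c\ne\mathrm{top}(i)$. $\mathrm{SC}(c)=\sum_i d(i,c)$. The separation graph $G(a,b)$ is the bipartite graph with both sides copies of $V$ and edge $(i,j)$ iff some $c\in C$ satisfies $a\succeq_i c$ and $c\succeq_j b$. The matching uncovered set is the set of $a$ such that $G(a,b)$ has a perfect matching for every $b\in C$. *)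

(* Defs.v *)
From HB Require Import structures.
From mathcomp Require Import all_boot all_order all_algebra.
From mathcomp Require Import fingroup perm.
From mathcomp Require Import reals.
Set Implicit Arguments. Unset Strict Implicit. Unset Printing Implicit Defensive.
Import Order.TTheory GRing.Theory Num.Theory.
Local Open Scope ring_scope.

(* The profile assigns to
   each voter i a permutation [pos i]; [pos i c] is the position of candidate
   c in voter i's ranking (position 0 = first choice). *)

Definition prefers n m (pos : 'I_n -> {perm 'I_m}) (i : 'I_n) (a c : 'I_m) : Prop :=
  (pos i a < pos i c)%N.

Definition prefers_eq n m (pos : 'I_n -> {perm 'I_m}) (i : 'I_n) (a c : 'I_m) : Prop :=
  a = c \/ prefers pos i a c.

Definition is_top n m (pos : 'I_n -> {perm 'I_m}) (i : 'I_n) (t : 'I_m) : Prop :=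
  forall c, prefers_eq pos i t c.

Definition point n m := ('I_n + 'I_m)%type.

(* pseudometric on V u C (co-location allowed) *)
Definition is_distance (R : realType) n m (d : point n m -> point n m -> R) : Prop :=
  (forall x, d x x = 0) /\
  (forall x y, 0 <= d x y) /\
  (forall x y, d x y = d y x) /\
  (forall x y z, d x z <= d x y + d y z).

Definition consistent (R : realType) n m (pos : 'I_n -> {perm 'I_m})
  (d : point n m -> point n m -> R) : Prop :=
  forall i c c', prefers pos i c c' -> d (inl i) (inr c) <= d (inl i) (inr c').

Definition decisive (R : realType) n m (pos : 'I_n -> {perm 'I_m})
  (d : point n m -> point n m -> R) (alpha : R) : Prop :=
  forall i t c, is_top pos i t -> c <> t ->
    d (inl i) (inr t) <= alpha * d (inl i) (inr c).

Definition SC (R : realType) n m (d : point n m -> point n m -> R) (c : 'I_m) : R :=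
  \sum_(i < n) d (inl i) (inr c).

Definition sep_edge n m (pos : 'I_n -> {perm 'I_m}) (a b : 'I_m) (i j : 'I_n) : Prop :=
  exists c, prefers_eq pos i a c /\ prefers_eq pos j c b.

Definition has_perfect_matching n m (pos : 'I_n -> {perm 'I_m}) (a b : 'I_m) : Prop :=
  exists f : {perm 'I_n}, forall i, sep_edge pos a b i (f i).

Definition matching_uncovered n m (pos : 'I_n -> {perm 'I_m}) (a : 'I_m) : Prop :=
  forall b, has_perfect_matching pos a b.

(* Main.v *)
Require Import Defs.
From HB Require Import structures.
From mathcomp Require Import all_boot all_order all_algebra.
From mathcomp Require Import fingroup perm.
From mathcomp Require Import reals.
From mathcomp Require Import lra zify.
Set Implicit Arguments. Unset Strict Implicit. Unset Printing Implicit Defensive.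
Import Order.TTheory GRing.Theory Num.Theory.
Local Open Scope ring_scope.

Definition ordf (N : nat) (f : nat -> nat) (k : 'I_N.+1) : 'I_N.+1 := inord (f k).
Arguments ordf : clear implicits.

Lemma ordfE N f (fB : forall k, (k < N.+1)%N -> (f k < N.+1)%N) (k : 'I_N.+1) :
  (ordf N f k : nat) = f k.
Proof. by rewrite /ordf inordK ?fB. Qed.

Lemma ordf_inj N f g : cancel f g -> (forall k, (k < N.+1)%N -> (f k < N.+1)%N) ->
  injective (ordf N f).
Proof.
move=> fK fB x y E; have := congr1 (@nat_of_ord _) E; rewrite !ordfE // => /(can_inj fK) h.
exact: val_inj.
Qed.

Definition f1 (k : nat) : nat :=
  match k with 0 => 0 | 1 => 3 | 2 => 1 | 3 => 2 | 4 => 4 | k => k end.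
Definition g1 (k : nat) : nat :=
  match k with 0 => 0 | 1 => 2 | 2 => 3 | 3 => 1 | 4 => 4 | k => k end.
Definition f2 (k : nat) : nat :=
  match k with 0 => 2 | 1 => 1 | 2 => 0 | 3 => 3 | 4 => 4 | k => k end.
Definition f3 (k : nat) : nat :=
  match k with 0 => 2 | 1 => 3 | 2 => 4 | 3 => 0 | 4 => 1 | k => k end.
Definition g3 (k : nat) : nat :=
  match k with 0 => 3 | 1 => 4 | 2 => 0 | 3 => 1 | 4 => 2 | k => k end.
Definition s3 (k : nat) : nat :=
  match k with 0 => 2 | 1 => 0 | 2 => 1 | k => k end.
Definition t3 (k : nat) : nat :=
  match k with 0 => 1 | 1 => 2 | 2 => 0 | k => k end.

Lemma f1K : cancel f1 g1. Proof. by case=> [|[|[|[|[|k]]]]]. Qed.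
Lemma f2K : cancel f2 f2. Proof. by case=> [|[|[|[|[|k]]]]]. Qed.
Lemma f3K : cancel f3 g3. Proof. by case=> [|[|[|[|[|k]]]]]. Qed.
Lemma s3K : cancel s3 t3. Proof. by case=> [|[|[|k]]]. Qed.
Lemma t3K : cancel t3 s3. Proof. by case=> [|[|[|k]]]. Qed.

Lemma f1B mm k : (k < mm.+4.+1)%N -> (f1 k < mm.+4.+1)%N. Proof. by case: k => [|[|[|[|[|k]]]]]. Qed.
Lemma f2B mm k : (k < mm.+4.+1)%N -> (f2 k < mm.+4.+1)%N. Proof. by case: k => [|[|[|[|[|k]]]]]. Qed.
Lemma f3B mm k : (k < mm.+4.+1)%N -> (f3 k < mm.+4.+1)%N. Proof. by case: k => [|[|[|[|[|k]]]]]. Qed.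
Lemma s3B k : (k < 3)%N -> (s3 k < 3)%N. Proof. by case: k => [|[|[|k]]]. Qed.
Lemma t3B k : (k < 3)%N -> (t3 k < 3)%N. Proof. by case: k => [|[|[|k]]]. Qed.

Definition P1 mm : {perm 'I_(mm.+4.+1)} := perm (ordf_inj f1K (@f1B mm)).
Definition P2 mm : {perm 'I_(mm.+4.+1)} := perm (ordf_inj f2K (@f2B mm)).
Definition P3 mm : {perm 'I_(mm.+4.+1)} := perm (ordf_inj f3K (@f3B mm)).
Definition S3 : {perm 'I_3} := perm (ordf_inj s3K s3B).
Definition T3 : {perm 'I_3} := perm (ordf_inj t3K t3B).

Definition fv (i : nat) : nat -> nat := match i with 0 => f1 | 1 => f2 | _ => f3 end.

Definition posv mm (i : 'I_3) : {perm 'I_(mm.+4.+1)} :=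
  match val i with 0 => P1 mm | 1 => P2 mm | _ => P3 mm end.

Lemma posvE mm (i : 'I_3) (c : 'I_(mm.+4.+1)) : (posv mm i c : nat) = fv i c.
Proof.
rewrite /posv /fv; case: i => [[|[|[|i]]] Hi] //=; rewrite permE ordfE //;
  [exact: f1B | exact: f2B | exact: f3B].
Qed.

Lemma S3E (i : 'I_3) : (S3 i : nat) = s3 i.
Proof. by rewrite permE ordfE //; exact: s3B. Qed.
Lemma T3E (i : 'I_3) : (T3 i : nat) = t3 i.
Proof. by rewrite permE ordfE //; exact: t3B. Qed.

Inductive Loc := LC | LA | LZ | LY | LW | LV2 | LV3 | LE.
Definition dl (R : realType) (al : R) (x y : Loc) : R :=
  let h := al / 2 in
  match x, y with
  | LC, LC => 0
  | LC, LA => 1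
  | LC, LZ => (1/2 + h)
  | LC, LY => (1/2 + h)
  | LC, LW => 1
  | LC, LV2 => (1/2)
  | LC, LV3 => (1/2)
  | LC, LE => 10
  | LA, LC => 1
  | LA, LA => 0
  | LA, LZ => (1/2 + h)
  | LA, LY => (1 + h)
  | LA, LW => (3/2 + h)
  | LA, LV2 => (1/2)
  | LA, LV3 => (1 + h)
  | LA, LE => 10
  | LZ, LC => (1/2 + h)
  | LZ, LA => (1/2 + h)
  | LZ, LZ => 0
  | LZ, LY => (1 + 2 * h)
  | LZ, LW => (3/2 + h)
  | LZ, LV2 => h
  | LZ, LV3 => (1 + h)
  | LZ, LE => 10
  | LY, LC => (1/2 + h)
  | LY, LA => (1 + h)
  | LY, LZ => (1 + 2 * h)
  | LY, LY => 0
  | LY, LW => (1/2 + h)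
  | LY, LV2 => (1 + h)
  | LY, LV3 => h
  | LY, LE => 10
  | LW, LC => 1
  | LW, LA => (3/2 + h)
  | LW, LZ => (3/2 + h)
  | LW, LY => (1/2 + h)
  | LW, LW => 0
  | LW, LV2 => (3/2)
  | LW, LV3 => (1/2)
  | LW, LE => 10
  | LV2, LC => (1/2)
  | LV2, LA => (1/2)
  | LV2, LZ => h
  | LV2, LY => (1 + h)
  | LV2, LW => (3/2)
  | LV2, LV2 => 0
  | LV2, LV3 => 1
  | LV2, LE => 10
  | LV3, LC => (1/2)
  | LV3, LA => (1 + h)
  | LV3, LZ => (1 + h)
  | LV3, LY => h
  | LV3, LW => (1/2)
  | LV3, LV2 => 1
  | LV3, LV3 => 0
  | LV3, LE => 10
  | LE, LC => 10
  | LE, LA => 10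
  | LE, LZ => 10
  | LE, LY => 10
  | LE, LW => 10
  | LE, LV2 => 10
  | LE, LV3 => 10
  | LE, LE => 0
  end.
Lemma dl0 (R : realType) (al : R) x : dl al x x = 0.
Proof. by case: x. Qed.

Lemma dl_sym (R : realType) (al : R) x y : dl al x y = dl al y x.
Proof. by case: x; case: y. Qed.

Lemma dl_ge0 (R : realType) (al : R) x y : 0 <= al <= 1 -> 0 <= dl al x y.
Proof. move=> /andP[h0 h1]; case: x; case: y => /=; lra. Qed.

Lemma dl_tri (R : realType) (al : R) x y z : 0 <= al <= 1 ->
  dl al x z <= dl al x y + dl al y z.
Proof. move=> /andP[h0 h1]; case: x; case: y; case: z => /=; lra. Qed.

Definition vloc (i : nat) : Loc := match i with 0 => LC | 1 => LV2 | _ => LV3 end.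
Definition cloc (k : nat) : Loc :=
  match k with 0 => LC | 1 => LA | 2 => LZ | 3 => LY | 4 => LW | _ => LE end.
Definition ploc n m (p : point n m) : Loc :=
  match p with inl i => vloc i | inr c => cloc c end.
Definition dd (R : realType) (al : R) n m (x y : point n m) : R :=
  dl al (ploc x) (ploc y).

Lemma SCE (R : realType) (al : R) m (c : 'I_m) :
  SC (@dd R al 3 m) c = dl al LC (cloc c) + dl al LV2 (cloc c) + dl al LV3 (cloc c).
Proof. by rewrite /SC !big_ord_recl big_ord0 /= addr0 addrA. Qed.

Lemma pe_of mm (i : 'I_3) (x y : 'I_(mm.+4.+1)) :
  (x : nat) = y \/ (fv i x < fv i y)%N -> prefers_eq (posv mm) i x y.
Proof.
case=> [/val_inj -> | h]; [by left | right].
by rewrite /prefers !posvE.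
Qed.

Ltac pe := apply: pe_of; rewrite /= ?S3E ?T3E ?inordK //=; by [left | right].

Theorem proposition2 (R : realType) (m : nat) (alpha : R) :
  (5 <= m)%N -> 0 <= alpha <= 1 ->
  exists (n : nat) (pos : 'I_n -> {perm 'I_m})
         (d : point n m -> point n m -> R) (a c0 : 'I_m),
    [/\ is_distance d, consistent pos d & decisive pos d alpha] /\
    matching_uncovered pos a /\
    [/\ (forall c, SC d c0 <= SC d c), 0 < SC d c0 &
        (5%:R / 2%:R + alpha / 2%:R) * SC d c0 <= SC d a].
Proof.
move=> hm ha.
have [mm ->] : exists mm, m = mm.+4.+1.
  by exists (m - 5)%N; lia.
have /andP[ha0 ha1] := ha.
exists 3%N, (posv mm), (@dd R alpha 3 (mm.+4.+1)), (inord 1), (inord 0).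
split; last split.
- split.
  + split; first by move=> x; exact: dl0.
    split; first by move=> x y; exact: dl_ge0.
    split; first by move=> x y; exact: dl_sym.
    by move=> x y z; exact: dl_tri.
  + move=> i c c'; rewrite /prefers !posvE /dd.
    case: i => [[|[|[|i]]] Hi] //;
    case: c => [[|[|[|[|[|k]]]]] Hc]; case: c' => [[|[|[|[|[|k']]]]] Hc'] //= _; lra.
  + move=> i t c Ht Hct.
    have Hct' : (c : nat) <> t by move=> E; apply: Hct; exact: val_inj.
    have Ht0 : fv i t = 0%N.
      rewrite -posvE.
      case: (Ht (((posv mm i)^-1)%g ord0)) => [-> | ]; first by rewrite permKV.
      by rewrite /prefers permKV.
    rewrite /dd; clear Ht Hct.
    case: i Ht0 => [[|[|[|i]]] Hi] //;
    case: t Hct' => [[|[|[|[|[|k]]]]] Ht'] //=;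
    case: c => [[|[|[|[|[|k']]]]] Hc] //= Hne _; try (by case: Hne); nra.
- move=> b; case: b => [[|[|[|[|[|k]]]]] Hb].
  + exists S3 => -[[|[|[|i]]] Hi] //.
    * by exists (inord 4); split; pe.
    * by exists (inord 0); split; pe.
    * by exists (inord 1); split; pe.
  + exists S3 => -[[|[|[|i]]] Hi] //.
    * by exists (inord 1); split; pe.
    * by exists (inord 0); split; pe.
    * by exists (inord 1); split; pe.
  + exists S3 => -[[|[|[|i]]] Hi] //.
    * by exists (inord 1); split; pe.
    * by exists (inord 0); split; pe.
    * by exists (inord 2); split; pe.
  + exists T3 => -[[|[|[|i]]] Hi] //.
    * by exists (inord 1); split; pe.
    * by exists (inord 3); split; pe.
    * by exists (inord 2); split; pe.
  + exists S3 => -[[|[|[|i]]] Hi] //.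
    * by exists (inord 4); split; pe.
    * by exists (inord 0); split; pe.
    * by exists (inord 1); split; pe.
  + exists S3 => -[[|[|[|i]]] Hi] //.
    * by exists (inord k.+4.+1); split; pe.
    * by exists (inord 0); split; pe.
    * by exists (inord 1); split; pe.
- rewrite !SCE !inordK //=; split.
  + case=> [[|[|[|[|[|k]]]]] Hc]; rewrite SCE /=; lra.
  + lra.
  + lra.
Qed.
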